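(* Let $(R,\mathfrak m,k)$ be a commutative noetherian local ring. Let $A$ be an artinian $R$-module and $L$ an $\mathfrak m$-torsion $R$-module. Fix an integer $t\geq0$ such that $\mathfrak m^tA=\mathfrak m^{t+1}A$. Then $\operatorname{len}_R(A\otimes_RL)\leq\operatorname{len}_R(A/\mathfrak m^tA)\,\beta^R_0(L)$ and $\operatorname{len}_R(A\otimes_RL)\leq\beta^R_0(A)\,\operatorname{len}_R(L/\mathfrak m^tL)$, with the convention $0\cdot\infty=0$.
   Context: $L$ is $\mathfrak m$-torsion if every element is annihilated by some power of $\mathfrak m$; $\beta^R_0(X)=\operatorname{len}_R(k\otimes_RX)$. *)

(* Defs.v *)
From mathcomp Require Import all_boot all_algebra.
From Stdlib Require Import ClassicalEpsilon.
Set Implicit Arguments. Unset Strict Implicit. Unset Printing Implicit Defensive.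
Import GRing.Theory.
Local Open Scope ring_scope.

Section Defs.
Variable R : comNzRingType.

Definition subs (T : Type) (X Y : T -> Prop) := forall x, X x -> Y x.
Definition same (T : Type) (X Y : T -> Prop) := forall x, X x <-> Y x.

Definition ideal (I : R -> Prop) :=
  [/\ I 0, (forall x y, I x -> I y -> I (x + y)) & (forall r x, I x -> I (r * x))].

Definition maximal_ideal (m : R -> Prop) :=
  [/\ ideal m, ~ m 1 & forall J, ideal J -> subs m J -> same J m \/ J 1].
Definition local_with (m : R -> Prop) :=
  maximal_ideal m /\ forall J, maximal_ideal J -> same J m.
Definition noetherian_ring :=
  forall I : nat -> R -> Prop, (forall n, ideal (I n)) ->
    (forall n, subs (I n) (I n.+1)) ->
    exists n0, forall n, (n0 <= n)%N -> same (I n) (I n0).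

Definition submod (M : lmodType R) (N : M -> Prop) :=
  [/\ N 0, (forall x y, N x -> N y -> N (x + y)) & (forall r x, N x -> N (r *: x))].

Definition artinian (M : lmodType R) :=
  forall N : nat -> M -> Prop, (forall n, submod (N n)) ->
    (forall n, subs (N n.+1) (N n)) ->
    exists n0, forall n, (n0 <= n)%N -> same (N n) (N n0).

Definition prodset (M : lmodType R) (I : R -> Prop) (N : M -> Prop) : M -> Prop :=
  fun x => exists s : seq (R * M),
    (forall p, List.In p s -> I p.1 /\ N p.2) /\ x = \sum_(p <- s) p.1 *: p.2.

Fixpoint mpow (M : lmodType R) (m : R -> Prop) (t : nat) : M -> Prop :=
  match t with 0 => fun _ => True | t'.+1 => prodset m (@mpow M m t') end.

(* the ideal m^n of R (R viewed as the regular module R^o) *)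
Arguments mpow : clear implicits.
Definition ipow (m : R -> Prop) (n : nat) : R -> Prop := mpow R^o m n.

Definition mtorsion (m : R -> Prop) (M : lmodType R) :=
  forall x : M, exists n, forall r, ipow m n r -> r *: x = 0.

(* (Q, p) is the quotient M / N: p linear, surjective, with kernel N *)
Definition is_quotient (M Q : lmodType R) (p : M -> Q) (N : M -> Prop) :=
  [/\ linear p, (forall q, exists x, p x = q) & (forall x, p x = 0 <-> N x)].

(* bilinear maps and the tensor product, by its universal property *)
Definition bilinear_map (A L W : lmodType R) (f : A -> L -> W) :=
  (forall l, linear (fun a => f a l)) /\ (forall a, linear (f a)).
Definition is_tensor (A L T : lmodType R) (b : A -> L -> T) :=
  bilinear_map b /\
  forall (W : lmodType R) (f : A -> L -> W), bilinear_map f ->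
    exists g : T -> W, [/\ linear g, (forall a l, g (b a l) = f a l) &
      forall g' : T -> W, linear g' -> (forall a l, g' (b a l) = f a l) ->
        forall x, g' x = g x].

(* length of a module: supremum of lengths of strictly increasing chains
   of submodules N_0 < N_1 < ... < N_n; value in nat + {oo} (None = oo) *)
Definition has_chain (M : lmodType R) (n : nat) :=
  exists N : nat -> M -> Prop,
    (forall i, (i <= n)%N -> submod (N i)) /\
    (forall i, (i < n)%N -> subs (N i) (N i.+1) /\ exists x, N i.+1 x /\ ~ N i x).

Definition len (M : lmodType R) : option nat :=
  match excluded_middle_informative
          (exists n, has_chain M n /\ forall k, has_chain M k -> (k <= n)%N) with
  | left H => Some (proj1_sig (constructive_indefinite_description _ H))
  | right _ => None
  end.
End Defs.
Arguments mpow {R} M m t.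


(* extended naturals option nat (None = infinity), with 0 * oo = 0 *)
Definition emul (x y : option nat) : option nat :=
  match x, y with
  | Some a, Some b => Some (a * b)%N
  | Some 0, None | None, Some 0 => Some 0%N
  | _, _ => None
  end.
Definition ele (x y : option nat) : Prop :=
  match x, y with
  | _, None => True
  | None, Some _ => False
  | Some a, Some b => (a <= b)%N
  end.

(* Main.v *)
From HB Require Import structures.
Require Import Defs.
From mathcomp Require Import all_boot all_algebra zify.
From Stdlib Require Import ClassicalEpsilon FunctionalExtensionality PropExtensionality Classical.
Set Implicit Arguments. Unset Strict Implicit. Unset Printing Implicit Defensive.
Import GRing.Theory.
Local Open Scope ring_scope.

Section Quot.
Variables (R : comNzRingType) (M : lmodType R) (S : M -> Prop).
Hypothesis hS : submod S.

Lemma sS0 : S 0. Proof. by case: hS. Qed.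
Lemma sSD x y : S x -> S y -> S (x + y). Proof. by case: hS => _ H _; apply: H. Qed.
Lemma sSZ r x : S x -> S (r *: x). Proof. by case: hS => _ _ H; apply: H. Qed.
Lemma sSN x : S x -> S (- x). Proof. by move=> h; rewrite -scaleN1r; apply: sSZ. Qed.
Lemma sSB x y : S x -> S y -> S (x - y). Proof. by move=> h1 h2; apply: sSD => //; apply: sSN. Qed.

Definition canon (x : M) : M := epsilon (inhabits 0) (fun y => S (x - y)).
Lemma canon_rel x : S (x - canon x).
Proof. apply: (epsilon_spec (inhabits 0) (fun y => S (x - y))); exists x; rewrite subrr; exact: sS0. Qed.
Lemma canon_eq x y : S (x - y) -> canon x = canon y.
Proof.
move=> h; rewrite /canon; congr (epsilon _); apply: functional_extensionality => z.
apply: propositional_extensionality; split => h2.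
- have -> : y - z = (x - z) - (x - y) by rewrite opprB [RHS]addrC addrA subrK.
  exact: sSB.
- have -> : x - z = (x - y) + (y - z) by rewrite addrA subrK.
  exact: sSD.
Qed.
Lemma canon_idem x : canon (canon x) = canon x.
Proof. apply: canon_eq; rewrite -opprB; apply: sSN; exact: canon_rel. Qed.

Definition qT (h : submod S) := {x : M | canon x == x}.
Local Notation qTh := (qT hS).
HB.instance Definition _ := Choice.on qTh.
Definition mk (x : M) : qTh := exist _ (canon x) (introT eqP (canon_idem x)).
Lemma mkK (q : qTh) : mk (val q) = q.
Proof. apply: val_inj => /=; case: q => x /= /eqP; done. Qed.
Lemma mk_eq x y : mk x = mk y <-> S (x - y).
Proof.
split => [h|h]; last by apply: val_inj => /=; exact: canon_eq.
have e : canon x = canon y by move: (congr1 val h).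
have -> : x - y = (x - canon x) - (y - canon y) by rewrite e opprB addrA subrK.
apply: sSB; exact: canon_rel.
Qed.
Lemma mk_rel x : S (x - val (mk x)). Proof. exact: canon_rel. Qed.

Definition qzero := mk 0.
Definition qadd (p q : qTh) := mk (val p + val q).
Definition qopp (q : qTh) := mk (- val q).
Definition qscale (r : R) (q : qTh) := mk (r *: val q).

Lemma qaddE x y : qadd (mk x) (mk y) = mk (x + y).
Proof.
apply/mk_eq.
have -> : val (mk x) + val (mk y) - (x + y) = - ((x - val (mk x)) + (y - val (mk y))).
  by rewrite [RHS]opprD !opprB opprD addrACA.
apply: sSN; apply: sSD; exact: mk_rel.
Qed.
Lemma qoppE x : qopp (mk x) = mk (- x).
Proof.
apply/mk_eq.
have -> : - val (mk x) - - x = x - val (mk x) by rewrite opprK addrC.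
exact: mk_rel.
Qed.
Lemma qscaleE r x : qscale r (mk x) = mk (r *: x).
Proof.
apply/mk_eq.
have -> : r *: val (mk x) - r *: x = r *: (- (x - val (mk x))) by rewrite opprB scalerBr.
apply: sSZ; apply: sSN; exact: mk_rel.
Qed.

Lemma qT_ind (P : qTh -> Prop) : (forall x, P (mk x)) -> forall q, P q.
Proof. by move=> h q; rewrite -(mkK q). Qed.

Lemma qaddA : associative qadd.
Proof. by elim/qT_ind => x; elim/qT_ind => y; elim/qT_ind => z; rewrite !qaddE addrA. Qed.
Lemma qaddC : commutative qadd.
Proof. by elim/qT_ind => x; elim/qT_ind => y; rewrite !qaddE addrC. Qed.
Lemma qadd0 : left_id qzero qadd.
Proof. by elim/qT_ind => x; rewrite /qzero qaddE add0r. Qed.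
Lemma qaddN : left_inverse qzero qopp qadd.
Proof. by elim/qT_ind => x; rewrite qoppE qaddE addNr. Qed.
HB.instance Definition _ := GRing.isZmodule.Build qTh qaddA qaddC qadd0 qaddN.

Lemma qscaleA a b v : qscale a (qscale b v) = qscale (a * b) v.
Proof. by elim/qT_ind: v => x; rewrite !qscaleE scalerA. Qed.
Lemma qscale1 : left_id 1 qscale.
Proof. by elim/qT_ind => x; rewrite qscaleE scale1r. Qed.
Lemma qscaleDr : right_distributive qscale +%R.
Proof. move=> a; elim/qT_ind => x; elim/qT_ind => y.
 by rewrite /GRing.add /= (qaddE x y) !qscaleE (qaddE (a *: x)) scalerDr. Qed.
Lemma qscaleDl v : {morph qscale^~ v: a b / a + b}.
Proof. elim/qT_ind: v => x a b; by rewrite /GRing.add /= !qscaleE qaddE scalerDl. Qed.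
HB.instance Definition _ := GRing.Zmodule_isLmodule.Build R qTh qscaleA qscale1 qscaleDr qscaleDl.

Lemma mk_linear : linear mk.
Proof. move=> a x y. by rewrite /GRing.add /= /GRing.scale /= qscaleE qaddE. Qed.
Lemma mk0 x : mk x = 0 <-> S x.
Proof. rewrite (_ : 0 = mk 0) //; rewrite mk_eq subr0 //. Qed.
End Quot.

Section Basic.
Variable R : comNzRingType.

Definition gspan (M : lmodType R) (G : M -> Prop) (x : M) :=
  forall P, submod P -> subs G P -> P x.

Lemma submodP (M : lmodType R) (P : M -> Prop) :
  P 0 -> (forall x y, P x -> P y -> P (x + y)) -> (forall r x, P x -> P (r *: x)) -> submod P.
Proof. by move=> *; split. Qed.

Lemma gspan_submod (M : lmodType R) (G : M -> Prop) : submod (gspan G).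
Proof.
split.
- move=> P hP _; exact: sS0.
- move=> x y hx hy P hP hG; apply: sSD => //; [exact: hx|exact: hy].
- move=> r x hx P hP hG; apply: sSZ => //; exact: hx.
Qed.
Lemma gspan_in (M : lmodType R) (G : M -> Prop) x : G x -> gspan G x.
Proof. by move=> hx P _ h; apply: h. Qed.
Lemma gspan_sub (M : lmodType R) (G P : M -> Prop) : submod P -> subs G P -> subs (gspan G) P.
Proof. by move=> hP hG x hx; apply: hx. Qed.

Section Lin.
Variables (U V : lmodType R) (f : U -> V).
Hypothesis hf : linear f.
Lemma lin0 : f 0 = 0.
Proof. have := hf 1 0 0; rewrite scaler0 addr0 => h.
  by apply: (addrI (f 0)); rewrite addr0 [RHS]h scale1r. Qed.
Lemma linD x y : f (x + y) = f x + f y.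
Proof. by have := hf 1 x y; rewrite !scale1r. Qed.
Lemma linZ r x : f (r *: x) = r *: f x.
Proof. by have := hf r x 0; rewrite !addr0 lin0 addr0. Qed.
Lemma linN x : f (- x) = - f x.
Proof. by rewrite -scaleN1r linZ scaleN1r. Qed.
Lemma linB x y : f (x - y) = f x - f y.
Proof. by rewrite linD linN. Qed.
End Lin.

Lemma preim_submod (U V : lmodType R) (f : U -> V) (P : V -> Prop) :
  linear f -> submod P -> submod (fun x => P (f x)).
Proof.
move=> hf hP; split.
- rewrite lin0 //; exact: sS0.
- by move=> x y hx hy; rewrite linD //; apply: sSD.
- by move=> r x hx; rewrite linZ //; apply: sSZ.
Qed.

Lemma img_submod (U V : lmodType R) (f : U -> V) (P : U -> Prop) :
  linear f -> submod P -> submod (fun z => exists x, P x /\ z = f x).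
Proof.
move=> hf hP; split.
- exists 0; split; [exact: sS0| by rewrite lin0].
- move=> _ _ [x [hx ->]] [y [hy ->]]; exists (x + y); split; [exact: sSD| by rewrite linD].
- move=> r _ [x [hx ->]]; exists (r *: x); split; [exact: sSZ| by rewrite linZ].
Qed.

Lemma prodset_sub (M : lmodType R) (I : R -> Prop) (N P : M -> Prop) :
  submod P -> (forall r x, I r -> N x -> P (r *: x)) -> subs (prodset I N) P.
Proof.
move=> hP hg x [s [hs ->]]; elim: s hs => [|p s IH] hs.
  rewrite big_nil; exact: sS0.
rewrite big_cons; apply: sSD => //.
  by case: (hs p (or_introl erefl)) => h1 h2; apply: hg.
by apply: IH => q hq; apply: hs; right.
Qed.

Lemma prodset_gen (M : lmodType R) (I : R -> Prop) (N : M -> Prop) r x :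
  I r -> N x -> prodset I N (r *: x).
Proof.
move=> hr hx; exists [:: (r, x)]; split; last by rewrite big_cons big_nil addr0.
by move=> p [<-|[]].
Qed.

Lemma prodset_mono (M : lmodType R) (I : R -> Prop) (N N' : M -> Prop) :
  subs N N' -> subs (prodset I N) (prodset I N').
Proof.
move=> h x [s [hs ->]]; exists s; split => // p hp.
by case: (hs p hp) => h1 h2; split => //; apply: h.
Qed.

Lemma prodset_submod (M : lmodType R) (I : R -> Prop) (N : M -> Prop) :
  ideal I -> submod (prodset I N).
Proof.
case=> I0 ID IM; split.
- by exists [::]; rewrite big_nil.
- move=> _ _ [s1 [h1 ->]] [s2 [h2 ->]]; exists (s1 ++ s2); split; last by rewrite big_cat.
  by move=> p hp; case: (List.in_app_or _ _ _ hp) => hq; [exact: h1|exact: h2].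
- move=> r _ [s [h ->]]; exists [seq (r * p.1, p.2) | p <- s]; split.
    move=> p hp; case: (proj1 (List.in_map_iff _ _ _) hp) => q [<- hq]; case: (h q hq) => hq1 hq2; split => //; exact: IM.
  by rewrite big_map scaler_sumr; apply: eq_bigr => p _; rewrite scalerA.
Qed.

End Basic.

Section Chains.
Variables (R : comNzRingType) (M : lmodType R).

Definition chain_prop (P Q : M -> Prop) (n : nat) (N : nat -> M -> Prop) :=
  (forall i, (i <= n)%N -> [/\ submod (N i), subs P (N i) & subs (N i) Q]) /\
  (forall i, (i < n)%N -> subs (N i) (N i.+1) /\ exists x, N i.+1 x /\ ~ N i x).
Definition chain_in (P Q : M -> Prop) (n : nat) := exists N, chain_prop P Q n N.
Definition bnd_in (P Q : M -> Prop) (b : nat) := forall n, chain_in P Q n -> (n <= b)%N.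

Definition sb (p : Prop) : nat := if excluded_middle_informative p then 1%N else 0%N.
Definition strict (W : nat -> M -> Prop) i := exists x, W i.+1 x /\ ~ W i x.
Fixpoint cnt (W : nat -> M -> Prop) k : nat :=
  match k with 0 => 0%N | k'.+1 => (cnt W k' + sb (strict W k'))%N end.

Lemma compress (P Q : M -> Prop) (W : nat -> M -> Prop) k :
  (forall i, (i <= k)%N -> [/\ submod (W i), subs P (W i) & subs (W i) Q]) ->
  (forall i, (i < k)%N -> subs (W i) (W i.+1)) ->
  exists N, chain_prop P Q (cnt W k) N /\ same (N (cnt W k)) (W k).
Proof.
elim: k => [|k IH] hW hinc.
  exists W; split; last by [].
  by split => // i; rewrite /= leqn0 => /eqP ->; apply: hW.
have [N [[hN1 hN2] hlast]] : exists N, chain_prop P Q (cnt W k) N /\ same (N (cnt W k)) (W k).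
  by apply: IH => i hi; [apply: hW; lia| apply: hinc; lia].
rewrite /= /sb; case: excluded_middle_informative => hs /=.
- set c := cnt W k.
  exists (fun i => if (i <= c)%N then N i else W k.+1); split; last first.
    by rewrite addn1 ltnn.
  split.
    move=> i hi /=; case: ifP => hic; first by apply: hN1.
    by apply: hW.
  move=> i hi /=; case: (ltnP i c) => hic.
    rewrite (ltnW hic); exact: hN2.
  have -> : i = c by lia.
  rewrite leqnn.
  split.
    move=> x /hlast hx; exact: (hinc k (ltnSn k) x hx).
  case: hs => x [h1 h2]; exists x; split => //; by move/hlast.
- exists N; rewrite addn0; split; first by split.
  move=> x; split.
    move/hlast => hx; exact: (hinc k (ltnSn k) x hx).
  move=> hx; apply/hlast; apply: NNPP => hn; apply: hs; by exists x.
Qed.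

Lemma cnt_sum (W1 W2 : nat -> M -> Prop) k :
  (forall i, (i < k)%N -> strict W1 i \/ strict W2 i) -> (k <= cnt W1 k + cnt W2 k)%N.
Proof.
elim: k => [//|k IH] h /=.
have := IH (fun i hi => h i (ltnW hi)).
have : (1 <= sb (strict W1 k) + sb (strict W2 k))%N.
  rewrite /sb; case: excluded_middle_informative => h1 //.
  case: excluded_middle_informative => h2 //.
  by case: (h k (ltnSn k)).
lia.
Qed.

Lemma subadd (P Q R' : M -> Prop) n :
  submod Q -> submod R' -> subs P Q -> subs Q R' -> chain_in P R' n ->
  exists n1 n2, [/\ (n <= n1 + n2)%N, chain_in P Q n1 & chain_in Q R' n2].
Proof.
move=> hQ hR hPQ hQR [N [hN1 hN2]].
set W1 := fun i x => N i x /\ Q x.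
set W2 := fun i x => exists a c, [/\ N i a, Q c & x = a + c].
have [N1 [c1 _]] : exists N1, chain_prop P Q (cnt W1 n) N1 /\ same (N1 (cnt W1 n)) (W1 n).
  apply: compress.
    move=> i hi; case: (hN1 i hi) => hs hP hR'; split.
    - split; first by split; [exact: sS0| exact: sS0].
      + by move=> x y [h1 h2] [h3 h4]; split; apply: sSD.
      + by move=> r x [h1 h2]; split; apply: sSZ.
    - by move=> x hx; split; [apply: hP| apply: hPQ].
    - by move=> x [].
  move=> i hi x [h1 h2]; split => //; case: (hN2 i hi) => h _; exact: h.
have [N2 [c2 _]] : exists N2, chain_prop Q R' (cnt W2 n) N2 /\ same (N2 (cnt W2 n)) (W2 n).
  apply: compress.
    move=> i hi; case: (hN1 i hi) => hs hP hR'; split.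
    - split.
      + exists 0, 0; split; [exact: sS0| exact: sS0| by rewrite addr0].
      + move=> _ _ [a [c [ha hc ->]]] [a' [c' [ha' hc' ->]]].
        exists (a + a'), (c + c'); split; [exact: sSD| exact: sSD| by rewrite addrACA].
      + move=> r _ [a [c [ha hc ->]]]; exists (r *: a), (r *: c); split;
          [exact: sSZ| exact: sSZ| by rewrite scalerDr].
    - by move=> x hx; exists 0, x; split; [exact: sS0| done| rewrite add0r].
    - move=> _ [a [c [ha hc ->]]]; apply: sSD => //; [exact: hR'| exact: hQR].
  move=> i hi _ [a [c [ha hc ->]]]; exists a, c; split => //.
  case: (hN2 i hi) => h _; exact: h.
exists (cnt W1 n), (cnt W2 n); split; [|by exists N1|by exists N2].
apply: cnt_sum => i hi; apply: NNPP => hn.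
case: (hN2 i hi) => hsub [x [hx1 hx0]]; apply: hx0.
have hs := (hN1 i (ltnW hi)); case: hs => hsi _ _.
have : W2 i x.
  apply: NNPP => hw; apply: hn; right; exists x; split => //.
  exists x, 0; split; [done| exact: sS0| by rewrite addr0].
case=> a [c [ha hc ex]].
have hc1 : W1 i.+1 c.
  split => //; have -> : c = x - a by rewrite ex addrC addKr.
  have hs1 := (hN1 i.+1 hi); case: hs1 => hsi1 _ _.
  apply: sSB => //; exact: hsub.
have hc0 : W1 i c.
  apply: NNPP => hw; apply: hn; left; by exists c.
rewrite ex; apply: sSD => //; by case: hc0.
Qed.

Lemma bnd_add (P Q R' : M -> Prop) b1 b2 :
  submod Q -> submod R' -> subs P Q -> subs Q R' ->
  bnd_in P Q b1 -> bnd_in Q R' b2 -> bnd_in P R' (b1 + b2).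
Proof.
move=> hQ hR hPQ hQR h1 h2 n hn.
case: (subadd hQ hR hPQ hQR hn) => n1 [n2 [hle c1 c2]].
have := h1 _ c1; have := h2 _ c2; lia.
Qed.

Lemma bnd_refl (P : M -> Prop) : bnd_in P P 0.
Proof.
move=> n [N [hN1 hN2]]; case: n hN1 hN2 => // n hN1 hN2.
case: (hN2 0%N erefl) => _ [x [hx1 hx0]].
case: (hN1 1%N erefl) => _ _ h1; case: (hN1 0%N erefl) => _ h0 _.
by case: hx0; apply: h0; apply: h1.
Qed.

Lemma bnd_mono (P Q P' Q' : M -> Prop) b :
  subs P' P -> subs Q Q' -> bnd_in P' Q' b -> bnd_in P Q b.
Proof.
move=> h1 h2 hb n [N [hN1 hN2]]; apply: hb; exists N; split => // i hi.
case: (hN1 i hi) => a b' c; split => // x hx; [apply: b'; exact: h1| apply: h2; exact: c].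
Qed.
End Chains.

Section Len.
Variables (R : comNzRingType).

Lemma len_some (M : lmodType R) b :
  len M = Some b -> has_chain M b /\ forall k, has_chain M k -> (k <= b)%N.
Proof.
rewrite /len; case: excluded_middle_informative => // H [<-].
exact: (proj2_sig (constructive_indefinite_description _ H)).
Qed.

Lemma zero_submod (M : lmodType R) : submod (fun x : M => x = 0).
Proof.
split => //.
- by move=> x y -> ->; rewrite addr0.
- by move=> r x ->; rewrite scaler0.
Qed.

Lemma has_chain0 (M : lmodType R) : has_chain M 0.
Proof.
exists (fun _ x => x = 0); split => //.
move=> i _; exact: zero_submod.
Qed.

Lemma len_bound (M : lmodType R) b :
  (forall k, has_chain M k -> (k <= b)%N) -> exists a, len M = Some a /\ (a <= b)%N.
Proof.
move=> hb; rewrite /len; case: excluded_middle_informative => H.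
  set a := proj1_sig _; exists a; split => //.
  apply: hb; exact: (proj1 (proj2_sig (constructive_indefinite_description _ H))).
exfalso.
have step : forall n, has_chain M n -> exists k, has_chain M k /\ (n < k)%N.
  move=> n hn; apply: NNPP => hne; apply: H; exists n; split => // k hk.
  apply: NNPP => hkn; apply: hne; exists k; split => //; lia.
have : forall i, exists k, has_chain M k /\ (i <= k)%N.
  elim => [|i [k [hk hik]]]; first by exists 0%N; split => //; exact: has_chain0.
  case: (step k hk) => k' [hk' hkk']; exists k'; split => //; lia.
move=> /(_ b.+1) [k [hk hbk]]; have := hb k hk; lia.
Qed.

Lemma chain_insert (M : lmodType R) a (N : nat -> M -> Prop) (P : M -> Prop) p :
  (forall i, (i <= a)%N -> submod (N i)) ->
  (forall i, (i < a)%N -> subs (N i) (N i.+1) /\ exists x, N i.+1 x /\ ~ N i x) ->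
  submod P -> (p <= a.+1)%N ->
  ((0 < p)%N -> subs (N p.-1) P /\ exists x, P x /\ ~ N p.-1 x) ->
  ((p <= a)%N -> subs P (N p) /\ exists x, N p x /\ ~ P x) ->
  has_chain M a.+1.
Proof.
move=> hN1 hN2 hP hpa hl hr.
exists (fun i => if (i < p)%N then N i else if i == p then P else N i.-1); split.
  move=> i hi /=; case: ltngtP => hip; first by apply: hN1; lia.
    by apply: hN1; lia.
  by [].
move=> i hi /=.
have [h|h] : (i.+1 < p)%N \/ (p <= i.+1)%N by lia.
  have -> : (i < p)%N = true by lia.
  have -> : (i.+1 < p)%N = true by lia.
  apply: hN2; lia.
have [h2|h2] : i.+1 = p \/ (p <= i)%N by lia.
  have -> : (i < p)%N = true by lia.
  have -> : (i.+1 < p)%N = false by lia.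
  rewrite -h2 eqxx; subst p; exact: hl.
have [h3|h3] : i = p \/ (p < i)%N by lia.
  have -> : (i < p)%N = false by lia.
  have -> : (i.+1 < p)%N = false by lia.
  have -> : (i.+1 == p) = false by lia.
  rewrite h3 eqxx /=; apply: hr; lia.
have -> : (i < p)%N = false by lia.
have -> : (i.+1 < p)%N = false by lia.
have -> : (i.+1 == p) = false by lia.
have -> : (i == p) = false by lia.
have e : i = (i.-1).+1 by lia.
rewrite /= {2 3}e; apply: hN2; lia.
Qed.
End Len.

Section CS.
Variables (R : comNzRingType) (m : R -> Prop).
Hypothesis hloc : local_with m.

Lemma gen_submod (M : lmodType R) (P : M -> Prop) (y : M) :
  submod P -> submod (fun x => exists n r, P n /\ x = n + r *: y).
Proof.
move=> hP; split.
- exists 0, 0; split; [exact: sS0| by rewrite scale0r addr0].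
- move=> _ _ [n [r [hn ->]]] [n' [r' [hn' ->]]]; exists (n + n'), (r + r'); split.
    exact: sSD.
  by rewrite scalerDl addrACA.
- move=> s _ [n [r [hn ->]]]; exists (s *: n), (s * r); split; first exact: sSZ.
  by rewrite scalerDr scalerA.
Qed.

Lemma qcs (Q : lmodType R) a : len Q = Some a ->
  exists (N : nat -> Q -> Prop) (xb : nat -> Q),
  [/\ forall x, N 0%N x -> x = 0, forall x, N a x,
      forall j, (j < a)%N -> forall x, N j.+1 x -> exists n r, N j n /\ x = n + r *: xb j,
      forall j, (j < a)%N -> forall r, m r -> N j (r *: xb j)
    & forall j, (j < a)%N -> subs (N j) (N j.+1)].
Proof.
move=> /len_some [[N [hN1 hN2]] hb].
have noins : forall P p, submod P -> (p <= a.+1)%N ->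
  ((0 < p)%N -> subs (N p.-1) P /\ exists x, P x /\ ~ N p.-1 x) ->
  ((p <= a)%N -> subs P (N p) /\ exists x, N p x /\ ~ P x) -> False.
  move=> P p hP hp hl hr; have := hb _ (chain_insert hN1 hN2 hP hp hl hr); lia.
have simple : forall j, (j < a)%N -> forall P, submod P -> subs (N j) P -> subs P (N j.+1) ->
    (exists x, P x /\ ~ N j x) -> subs (N j.+1) P.
  move=> j hj P hP h1 h2 h3 x hx; apply: NNPP => hnx.
  apply: (noins P j.+1 hP (ltnW hj)) => _; split => //; by exists x.
have gen : forall j, (j < a)%N -> forall y, N j.+1 y -> ~ N j y ->
    forall x, N j.+1 x -> exists n r, N j n /\ x = n + r *: y.
  move=> j hj y hy hny; apply: (simple j hj).
  - apply: gen_submod; apply: hN1; lia.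
  - by move=> x hx; exists x, 0; rewrite scale0r addr0.
  - move=> _ [n [r [hn ->]]]; have hs := hN1 j.+1 hj; apply: sSD => //.
      by case: (hN2 j hj) => h _; apply: h.
    exact: sSZ.
  - exists y; split => //; exists 0, 1; split; [apply: sS0; apply: hN1; lia| by rewrite scale1r add0r].
pose xb j := epsilon (inhabits (0 : Q)) (fun x => N j.+1 x /\ ~ N j x).
have hxb : forall j, (j < a)%N -> N j.+1 (xb j) /\ ~ N j (xb j).
  move=> j hj; apply: (epsilon_spec (inhabits (0 : Q)) (fun x => N j.+1 x /\ ~ N j x)).
  by case: (hN2 j hj).
exists N, xb; split.
- move=> x hx; apply: NNPP => hx0.
  apply: (noins (fun x => x = 0) 0%N (zero_submod Q) (leq0n _)) => // _; split.
    move=> _ ->; apply: sS0; exact: hN1.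
  by exists x.
- move=> x; apply: NNPP => hx.
  have hT : submod (fun _ : Q => True) by split.
  apply: (noins (fun _ => True) a.+1 hT (leqnn _)).
  + move=> _; split => //; by exists x.
  + by rewrite ltnn.
- move=> j hj; case: (hxb j hj) => h1 h2; exact: gen.
- move=> j hj.
  have hNj : submod (N j) by apply: hN1; lia.
  case: (hxb j hj) => hx1 hx2.
  pose J := fun r => N j (r *: xb j).
  have hJ : ideal J.
    split.
    + rewrite /J scale0r; exact: sS0.
    + by move=> x y; rewrite /J scalerDl; apply: sSD.
    + by move=> r x; rewrite /J -scalerA; apply: sSZ.
  have hmax : maximal_ideal J.
    split => //; first by rewrite /J scale1r.
    move=> K hK hJK.
    case: (classic (exists c, K c /\ ~ J c)) => [[c [hc hnc]]|hno].
      right.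
      have hy1 : N j.+1 (c *: xb j) by apply: sSZ => //; apply: hN1.
      case: (gen j hj _ hy1 hnc (xb j) hx1) => n [d [hn e]].
      have hJd : J (1 - d * c).
        rewrite /J scalerBl scale1r -scalerA {1}e addrK //.
      case: hK => _ hKD hKM.
      have -> : (1 : R) = (1 - d * c) + d * c by rewrite subrK.
      apply: hKD; [exact: hJK| exact: hKM].
    left => x; split => [hx|hx]; last exact: hJK.
    apply: NNPP => hnx; apply: hno; by exists x.
  move=> r hr; case: hloc => _ hu; exact: (proj2 (hu J hmax r) hr).
- move=> j hj; by case: (hN2 j hj).
Qed.

Lemma cs (X Q : lmodType R) (p : X -> Q) (K : X -> Prop) a :
  is_quotient p K -> len Q = Some a ->
  exists (Xs : nat -> X -> Prop) (xs : nat -> X),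
  [/\ forall x, Xs 0%N x -> K x, forall x, Xs a x,
      forall j, (j < a)%N -> forall x, Xs j.+1 x -> exists y r, Xs j y /\ x = y + r *: xs j,
      forall j, (j < a)%N -> forall r, m r -> Xs j (r *: xs j)
    & forall j, (j < a)%N -> subs (Xs j) (Xs j.+1)].
Proof.
case=> hp hsurj hker /qcs [N [xb [h0 ha hgen hm hinc]]].
pose xs j := epsilon (inhabits (0 : X)) (fun x => p x = xb j).
have hxs : forall j, p (xs j) = xb j.
  move=> j; apply: (epsilon_spec (inhabits (0 : X)) (fun x => p x = xb j)); exact: hsurj.
exists (fun j x => N j (p x)), xs; split.
- by move=> x /h0 /hker.
- by move=> x; apply: ha.
- move=> j hj x hx; case: (hgen j hj _ hx) => n [r [hn e]].
  exists (x - r *: xs j), r; split; last by rewrite subrK.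
  by rewrite linB // linZ // hxs e addrK.
- by move=> j hj r hr; rewrite linZ // hxs; apply: hm.
- by move=> j hj x; apply: hinc.
Qed.
End CS.

Section F.
Variables (R : comNzRingType).

Lemma pullback (Y T : lmodType R) (psi : Y -> T) (G : Y -> Prop) (Tj Tj1 : T -> Prop) n :
  linear psi -> (forall y, G y -> Tj (psi y)) ->
  (forall t, Tj1 t -> exists t0 y, Tj t0 /\ t = t0 + psi y) ->
  chain_in Tj Tj1 n -> chain_in G (fun _ => True) n.
Proof.
move=> hpsi hG hT [N [hN1 hN2]].
exists (fun i y => N i (psi y)); split.
  move=> i hi; case: (hN1 i hi) => hs hP hQ; split => //.
    exact: preim_submod.
  by move=> y /hG /hP.
move=> i hi; case: (hN2 i hi) => hsub [x [hx1 hx0]]; split.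
  by move=> y; apply: hsub.
case: (hN1 i.+1 hi) => hs1 hP1 hQ1; case: (hN1 i (ltnW hi)) => hs0 hP0 hQ0.
case: (hT x (hQ1 x hx1)) => t0 [y [ht0 e]].
exists y; split.
  have -> : psi y = x - t0 by rewrite e addrC addKr.
  apply: sSB => //; exact: hP1.
move=> hy; apply: hx0; rewrite e; apply: sSD => //; exact: hP0.
Qed.

Lemma pushforward (Y K : lmodType R) (phi : Y -> K) (G : Y -> Prop) n :
  linear phi -> (forall y, phi y = 0 -> gspan G y) ->
  chain_in G (fun _ => True) n -> has_chain K n.
Proof.
move=> hphi hker [N [hN1 hN2]].
exists (fun i z => exists y, N i y /\ z = phi y); split.
  move=> i hi; apply: img_submod => //; by case: (hN1 i hi).
move=> i hi; case: (hN2 i hi) => hsub [x [hx1 hx0]]; split.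
  by move=> _ [y [hy ->]]; exists y; split => //; apply: hsub.
case: (hN1 i (ltnW hi)) => hs0 hP0 _.
exists (phi x); split; first by exists x.
case=> y [hy e]; apply: hx0.
have : gspan G (x - y) by apply: hker; rewrite linB // e subrr.
move=> /(_ _ hs0 hP0) hxy.
have -> : x = (x - y) + y by rewrite subrK.
exact: sSD.
Qed.

Lemma tensor_span (A L T : lmodType R) (b : A -> L -> T) :
  is_tensor b -> forall t, gspan (fun t => exists a l, t = b a l) t.
Proof.
move=> [hb hu] t.
set G := (fun t => exists a l, t = b a l).
have hS := gspan_submod G.
have hf : bilinear_map (fun (a : A) (l : L) => (0 : qT hS)).
  by split => ? ? ? ?; rewrite scaler0 addr0.
case: (hu _ _ hf) => g [hg hgb huniq].
have e1 := huniq (mk hS) (mk_linear hS) (fun a l => proj2 (mk0 hS _) (gspan_in (ex_intro _ a (ex_intro _ l erefl)))).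
have e2 := huniq (fun _ => 0) (fun _ _ _ => etrans (esym (addr0 _)) (congr1 (fun z => z + 0) (esym (scaler0 _ _)))) (fun _ _ => erefl).
by apply/(mk0 hS); rewrite e1 -(e2 t).
Qed.

Variable m : R -> Prop.

Lemma beta (Y k KY : lmodType R) (pk : R^o -> k) (bY : k -> Y -> KY) b :
  is_quotient pk m -> is_tensor bY -> len KY = Some b ->
  bnd_in (prodset m (fun _ : Y => True)) (fun _ => True) b.
Proof.
move=> [hpk hsurj hker] [[hb1 hb2] hu] hlen.
set G := prodset m (fun _ : Y => True).
have hS := gspan_submod G.
pose sg (c : k) : R^o := epsilon (inhabits 0) (fun r : R^o => pk r = c).
have hsg : forall c, pk (sg c) = c.
  move=> c; apply: (epsilon_spec (inhabits 0) (fun r : R^o => pk r = c)); exact: hsurj.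
have hmz : forall r y, m r -> r *: mk hS y = 0.
  move=> r y hr; rewrite -linZ; last exact: mk_linear.
  apply/mk0; apply: gspan_in; exact: prodset_gen.
have hf : bilinear_map (fun c y => (sg c : R) *: mk hS y).
  split.
    move=> y a c c' /=.
    pose d : R^o := sg (a *: c + c') - (a *: sg c + sg c').
    have hd : m d.
      apply/hker; rewrite /d (linB hpk) (linD hpk) (linZ hpk) !hsg subrr //.
    have key : forall s : R, m (s - (a * sg c + sg c')) ->
        s *: mk hS y = a *: ((sg c : R) *: mk hS y) + (sg c' : R) *: mk hS y.
      move=> s hs; rewrite -[s](subrK (a * sg c + sg c')) scalerDl (hmz _ _ hs) add0r.
      by rewrite scalerDl scalerA.
    exact: (key _ hd).
  move=> c a y y' /=.
  by rewrite (mk_linear hS) scalerDr !scalerA mulrC.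
case: (hu _ _ hf) => g [hg hgb _].
have hphi : linear (bY (pk 1)) by apply: hb2.
have hk : forall y, bY (pk 1) y = 0 -> gspan G y.
  move=> y hy.
  have := hgb (pk 1) y; rewrite hy lin0 // => e.
  have he : m (sg (pk 1) - 1).
    by apply/hker; rewrite linB // hsg subrr.
  have key2 : forall s : R, m (s - 1) -> s *: mk hS y = mk hS y.
    move=> s hs; rewrite -[s](subrK 1) scalerDl (hmz _ _ hs) add0r scale1r //.
  have : mk hS y = 0 by exact: (etrans (esym (key2 _ he)) (esym e)).
  by move/mk0.
move=> n hn; case: (len_some hlen) => _ hb.
apply: hb; exact: (pushforward hphi hk hn).
Qed.
End F.

Section G.
Variables (R : comNzRingType) (m : R -> Prop).

Lemma GL (X Y T : lmodType R) (b : X -> Y -> T) (n be : nat)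
    (Xs : nat -> X -> Prop) (xs : nat -> X) :
  bilinear_map b -> (forall t, gspan (fun t => exists x y, t = b x y) t) ->
  (forall x y, Xs 0%N x -> b x y = 0) -> (forall x, Xs n x) ->
  (forall j, (j < n)%N -> forall x, Xs j.+1 x -> exists y r, Xs j y /\ x = y + r *: xs j) ->
  (forall j, (j < n)%N -> forall r, m r -> Xs j (r *: xs j)) ->
  (forall j, (j < n)%N -> subs (Xs j) (Xs j.+1)) ->
  ((0 < n)%N -> bnd_in (prodset m (fun _ : Y => True)) (fun _ => True) be) ->
  forall k, has_chain T k -> (k <= n * be)%N.
Proof.
move=> [hb1 hb2] hspan h0 hn hgen hm hinc hbe.
pose Tj j := gspan (fun t => exists x y, Xs j x /\ t = b x y).
have hTs : forall j, submod (Tj j) by move=> j; exact: gspan_submod.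
have hT0 : subs (Tj 0%N) (fun t => t = 0).
  apply: gspan_sub; first exact: zero_submod.
  by move=> _ [x [y [hx ->]]]; apply: h0.
have claim : forall j, (j <= n)%N -> bnd_in (Tj 0%N) (Tj j) (j * be).
  elim => [|j IH] hj; first by rewrite mul0n; exact: bnd_refl.
  rewrite mulSnr; apply: (bnd_add (hTs j) (hTs j.+1)).
  - by move=> t /hT0 ->; apply: sS0.
  - apply: gspan_sub => //.
    move=> _ [x [y [hx ->]]]; apply: gspan_in; exists x, y; split => //; exact: hinc.
  - apply: IH; lia.
  - move=> k hk; apply: (hbe (leq_ltn_trans (leq0n j) hj)).
    apply: (pullback (psi := b (xs j)) (hb2 (xs j)) _ _ hk).
      apply: (prodset_sub (P := fun y => Tj j (b (xs j) y))).
        exact: (preim_submod (hb2 (xs j)) (hTs j)).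
      move=> r y hr _; rewrite (linZ (hb2 _)) -(linZ (hb1 y)).
      apply: gspan_in; exists (r *: xs j), y; split => //; exact: hm.
    apply: (gspan_sub (P := fun t => exists t0 y, Tj j t0 /\ t = t0 + b (xs j) y)).
      split.
      + exists 0, 0; split; [exact: (sS0 (hTs j))| by rewrite (lin0 (hb2 _)) addr0].
      + move=> _ _ [t0 [y [ht0 ->]]] [t1 [y1 [ht1 ->]]]; exists (t0 + t1), (y + y1); split.
          exact: (sSD (hTs j)).
        by rewrite (linD (hb2 _)) addrACA.
      + move=> r _ [t0 [y [ht0 ->]]]; exists (r *: t0), (r *: y); split; first exact: (sSZ (hTs j)).
        by rewrite (linZ (hb2 _)) scalerDr.
    move=> _ [x [y [hx ->]]]; case: (hgen j hj x hx) => x' [r [hx' ->]].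
    exists (b x' y), (r *: y); split.
      by apply: gspan_in; exists x', y.
    by rewrite (linD (hb1 y)) (linZ (hb1 y)) (linZ (hb2 _)).
move=> k [N [hN1 hN2]]; apply: (claim n (leqnn n)); exists N; split => //.
move=> i hi; split; first exact: hN1.
  by move=> t /hT0 ->; apply: sS0; apply: hN1.
move=> t _; apply: hspan; first exact: hTs.
move=> _ [x [y ->]]; apply: gspan_in; exists x, y; split => //.
Qed.

Lemma tv (A L T : lmodType R) (b : A -> L -> T) :
  bilinear_map b -> forall n (l : L), (forall r, ipow m n r -> r *: l = 0) ->
  forall j a, mpow A m (j + n) a -> b a l = 0.
Proof.
move=> [hb1 hb2]; elim => [|n IH] l hl j a.
  have -> : l = 0 by rewrite -(scale1r l); apply: hl.
  by move=> _; apply: (lin0 (hb2 a)).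
rewrite addnS /=; move: a; apply: (prodset_sub (P := fun a => b a l = 0)).
  exact: (preim_submod (hb1 l) (zero_submod T)).
move=> r a hr ha; rewrite (linZ (hb1 l)) -(linZ (hb2 a)).
apply: (IH _ _ j a ha) => s hs; rewrite scalerA mulrC; apply: hl.
exact: (prodset_gen (M := R^o) hr hs).
Qed.

Lemma stab (A : lmodType R) t : same (mpow A m t) (mpow A m t.+1) ->
  forall j, subs (mpow A m t) (mpow A m (t + j)).
Proof.
move=> hs; elim => [|j IH]; first by rewrite addn0.
rewrite addnS => x /hs /= hx; exact: (prodset_mono IH hx).
Qed.

Lemma tw (A L T : lmodType R) (b : A -> L -> T) :
  bilinear_map b -> forall n j, (forall a l, mpow A m (j + n) a -> b a l = 0) ->
  forall a l, mpow A m j a -> mpow L m n l -> b a l = 0.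
Proof.
move=> [hb1 hb2]; elim => [|n IH] j h a l ha.
  by move: ha; rewrite -{1}(addn0 j) => ha _; apply: h.
rewrite /=; move: l; apply: (prodset_sub (P := fun l => b a l = 0)).
  exact: (preim_submod (hb2 a) (zero_submod T)).
move=> r l hr hl; rewrite (linZ (hb2 a)) -(linZ (hb1 l)).
apply: (IH j.+1) => //.
  by move=> a' l'; rewrite addSnnS; apply: h.
exact: prodset_gen.
Qed.

Lemma all_pow (L : lmodType R) : (forall l : L, mpow L m 1 l) -> forall j l, mpow L m j l.
Proof.
move=> h; elim => [//|j IH] l /=.
exact: (prodset_mono (N := fun _ => True) (fun x _ => IH x) (h l)).
Qed.
End G.

Lemma bzero (R : comNzRingType) (m : R -> Prop) (Y : lmodType R) : ideal m ->
  bnd_in (prodset m (fun _ : Y => True)) (fun _ => True) 0 -> forall y, mpow Y m 1 y.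
Proof.
move=> hmI h y; apply: NNPP => hy.
have : chain_in (prodset m (fun _ : Y => True)) (fun _ => True) 1.
  exists (fun i => if i == 0%N then prodset m (fun _ : Y => True) else (fun _ => True)); split.
    have hG : submod (prodset m (fun _ : Y => True)) by exact: prodset_submod.
    have hTT : submod (fun _ : Y => True) by split.
    by move=> i hi; case: (i == 0%N); split.
  move=> i; rewrite ltnS leqn0 => /eqP -> /=; split => //; by exists y.
by move/h.
Qed.

Lemma tzero (R : comNzRingType) (A L T : lmodType R) (b : A -> L -> T) :
  (forall t, gspan (fun t => exists x y, t = b x y) t) ->
  (forall a l, b a l = 0) -> forall y, ele (len T) y.
Proof.
move=> hspan h0 y.
have hb0 : forall k, has_chain T k -> (k <= 0)%N.
  move=> kk [N [hN1 hN2]]; case: kk hN1 hN2 => // kk hN1 hN2.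
  case: (hN2 0%N erefl) => _ [x [hx1 hx0]]; exfalso; apply: hx0.
  have -> : x = 0.
    apply: (hspan x (fun t => t = 0) (zero_submod T)).
    by move=> _ [a [l ->]].
  apply: sS0; exact: hN1.
case: (len_bound hb0) => a [-> ha]; have -> : a = 0%N by lia.
by case: y.
Qed.

Lemma eleS (R : comNzRingType) (T : lmodType R) c :
  (forall k, has_chain T k -> (k <= c)%N) -> ele (len T) (Some c).
Proof. by move=> h; case: (len_bound h) => a [-> ha]. Qed.

Theorem theorem3p8 (R : comNzRingType) (m : R -> Prop) (A L : lmodType R) (t : nat) :
  noetherian_ring R -> local_with m ->
  artinian A -> mtorsion m L ->
  same (mpow A m t) (mpow A m t.+1) ->
  forall (k : lmodType R) (pk : R^o -> k), is_quotient pk m ->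
  forall (T : lmodType R) (b : A -> L -> T), is_tensor b ->
  forall (QA : lmodType R) (pA : A -> QA), is_quotient pA (mpow A m t) ->
  forall (QL : lmodType R) (pL : L -> QL), is_quotient pL (mpow L m t) ->
  forall (KA : lmodType R) (bA : k -> A -> KA), is_tensor bA ->
  forall (KL : lmodType R) (bL : k -> L -> KL), is_tensor bL ->
  ele (len T) (emul (len QA) (len KL)) /\
  ele (len T) (emul (len KA) (len QL)).
Proof.
move=> _ hloc _ htor hstab k pk hk T b hT QA pA hQA QL pL hQL KA bA hKA KL bL hKL.
have hmI : ideal m by case: hloc => [[]].
have hbb := proj1 hT.
have hspan := tensor_span hT.
have V : forall a l, mpow A m t a -> b a l = 0.
  move=> a l ha; case: (htor l) => n hn.
  exact: (tv hbb hn (stab hstab n ha)).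
have W : forall a l, mpow L m t l -> b a l = 0.
  move=> a l hl; apply: (tw hbb (n := t) (j := 0%N) _ I hl).
  by move=> a' l'; rewrite add0n; apply: V.
have hbb' : bilinear_map (fun l a => b a l) by case: hbb => h1 h2; split.
have hspan' : forall t, gspan (fun t => exists x y, t = (fun l a => b a l) x y) t.
  move=> u P hP hG; apply: (hspan u P hP) => _ [a1 [l1 ->]]; apply: hG; by exists l1, a1.
split.
- case hKLe: (len KL) => [be|].
  + have hbe := beta hk hKL hKLe.
    case: be hKLe hbe => [|be] hKLe hbe.
      apply: (tzero hspan) => a0 l0; apply: W; apply: all_pow; exact: bzero hbe.
    case hQAe: (len QA) => [a|]; last by case: (len T).
    case: (cs hloc hQA hQAe) => Xs [xs [h0 ha hgen hmx hinc]].
    have h0' : forall x y, Xs 0%N x -> b x y = 0 by move=> x y /h0; apply: V.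
    have -> : emul (Some a) (Some be.+1) = Some (a * be.+1)%N by case: a {ha hgen hmx hinc hQAe}.
    apply: eleS => kk hkk.
    exact: (GL hbb hspan h0' ha hgen hmx hinc (fun _ => hbe) hkk).
  + case hQAe: (len QA) => [a|]; last by case: (len T).
    case: a hQAe => [|a] hQAe; last by case: (len T).
    case: (cs hloc hQA hQAe) => Xs [xs [h0 ha hgen hmx hinc]].
    have h0' : forall x y, Xs 0%N x -> b x y = 0 by move=> x y /h0; apply: V.
    rewrite /=; apply: eleS => kk hkk.
    have := (GL (be := 0%N) hbb hspan h0' ha hgen hmx hinc (fun h => False_ind _ (notF h)) hkk); lia.
- case hKAe: (len KA) => [be|].
  + have hbe := beta hk hKA hKAe.
    case: be hKAe hbe => [|be] hKAe hbe.
      apply: (tzero hspan) => a0 l0; apply: V; apply: all_pow; exact: bzero hbe.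
    case hQLe: (len QL) => [c|]; last by case: (len T).
    case: (cs hloc hQL hQLe) => Xs [xs [h0 ha hgen hmx hinc]].
    have h0' : forall x y, Xs 0%N x -> b y x = 0 by move=> x y /h0; apply: W.
    have -> : emul (Some be.+1) (Some c) = Some (be.+1 * c)%N by case: c {ha hgen hmx hinc hQLe}.
    apply: eleS => kk hkk.
    have := (GL hbb' hspan' h0' ha hgen hmx hinc (fun _ => hbe) hkk); lia.
  + case hQLe: (len QL) => [c|]; last by case: (len T).
    case: c hQLe => [|c] hQLe; last by case: (len T).
    case: (cs hloc hQL hQLe) => Xs [xs [h0 ha hgen hmx hinc]].
    have h0' : forall x y, Xs 0%N x -> b y x = 0 by move=> x y /h0; apply: W.
    rewrite /=; apply: eleS => kk hkk.
    have := (GL (be := 0%N) hbb' hspan' h0' ha hgen hmx hinc (fun h => False_ind _ (notF h)) hkk); lia.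
Qed.
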